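(* Let $A>0$, $\alpha>0$, $k\ge2$, and define \[ \Lambda^{(k,1)}(A,\alpha):=\inf_{a\ge1}\Big[\lambda_k(I_{A^{1/2}a},\alpha)+\lambda_1(I_{A^{1/2}/a},\alpha)\Big]. \] Then \[ \frac{3\pi^2\alpha^{2/3}}{(\pi^2+2A^{1/2}\alpha)^{2/3}A^{2/3}}(k-2)^{2/3}\le\Lambda^{(k,1)}(A,\alpha), \] and, provided $\alpha\le\pi^2A^{-1/2}k^2$, \[ \Lambda^{(k,1)}(A,\alpha)\le3\Big(\frac{\pi\alpha}{A}\Big)^{2/3}k^{2/3}. \] Moreover the infimum is attained, and (for fixed $A,\alpha$) there are constants $0<c\le c'$ such that for all sufficiently large $k$ it is attained at some $a_k\ge1$ with $ck^{2/3}\le a_k\le c'k^{2/3}$. Finally, \[ \lim_{k\to\infty}\frac{\Lambda^{(k,1)}(A,\alpha)}{k^{2/3}}=3\Big(\frac{\pi\alpha}{A}\Big)^{2/3}. \]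
   Context: For an interval $I_b\subset\mathbb{R}$ of length $b>0$ and $\alpha>0$, $\lambda_1(I_b,\alpha)<\lambda_2(I_b,\alpha)<\cdots$ denote the eigenvalues of the Robin problem $-u''=\lambda u$ on $I_b$, $\partial_\nu u+\alpha u=0$ at both endpoints ($\partial_\nu$ the outward derivative). *)

(* Defs.v *)
From Stdlib Require Import Reals Lra List ClassicalEpsilon.
From Coquelicot Require Import Coquelicot.
Open Scope R_scope.

(* Real power x^y for x > 0, extended by 0 for x <= 0 (so 0^y = 0 for y > 0). *)
Definition rpow (x y : R) : R :=
  if Rlt_dec 0 x then Rpower x y else 0.

(* lam is a Robin eigenvalue of -u'' = lam u on the interval I_b = (0,b)
   with Robin parameter alpha: there is a nontrivial solution u (with
   derivative u') of the ODE on [0,b] satisfying the Robin conditions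
   d_nu u + alpha u = 0 at both endpoints (outward derivative:
   -u'(0) at 0 and u'(b) at b). *)
Definition robin_eigenvalue (b alpha lam : R) : Prop :=
  exists u u' : R -> R,
    (forall x, 0 <= x <= b -> is_derive u x (u' x) /\ is_derive u' x (- lam * u x)) /\
    (exists x, 0 <= x <= b /\ u x <> 0) /\
    - u' 0 + alpha * u 0 = 0 /\
    u' b + alpha * u b = 0.

(* lam is the k-th eigenvalue (k >= 1) in increasing order: it is an
   eigenvalue and exactly k-1 eigenvalues are strictly smaller. *)
Definition is_kth_robin_eigenvalue (b alpha : R) (k : nat) (lam : R) : Prop :=
  robin_eigenvalue b alpha lam /\
  exists l : list R, NoDup l /\ length l = (k - 1)%nat /\
    forall mu, In mu l <-> (robin_eigenvalue b alpha mu /\ mu < lam).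

Definition robin_ev (b alpha : R) (k : nat) : R :=
  epsilon (inhabits 0) (is_kth_robin_eigenvalue b alpha k).

Definition Lam_fun (A alpha : R) (k : nat) (a : R) : R :=
  robin_ev (sqrt A * a) alpha k + robin_ev (sqrt A / a) alpha 1.

Definition LambdaK1 (A alpha : R) (k : nat) : Rbar :=
  Glb_Rbar (fun x => exists a, 1 <= a /\ x = Lam_fun A alpha k a).

(* Main.v *)
Require Import Defs.
From Stdlib Require Import Reals.
From Coquelicot Require Import Coquelicot.
Open Scope R_scope.
From Stdlib Require Import Lra Lia Psatz List FinFun ClassicalEpsilon.
From Coquelicot Require Import Coquelicot.

Lemma PI_gt_31 : 3.1 < PI.
Proof. destruct (PI_2_3_7_ineq 1) as [H _]. unfold tg_alt, PI_2_3_7_tg, Ratan_seq in H. simpl in H. lra. Qed.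
Lemma PI_lt_32 : PI < 3.2.
Proof. destruct (PI_2_3_7_ineq 1) as [_ H]. unfold tg_alt, PI_2_3_7_tg, Ratan_seq in H. simpl in H. lra. Qed.

Lemma Rpower_pos x y : 0 < Rpower x y.
Proof. unfold Rpower; apply exp_pos. Qed.

Lemma rpow_eq x y : 0 < x -> rpow x y = Rpower x y.
Proof. intros H; unfold rpow; destruct (Rlt_dec 0 x); [reflexivity|lra]. Qed.

Lemma rpow_zero y : rpow 0 y = 0.
Proof. unfold rpow; destruct (Rlt_dec 0 0); [lra|reflexivity]. Qed.

Lemma Rpower_cube13 x : 0 < x -> (Rpower x (1/3)) ^ 3 = x.
Proof.
  intros H. rewrite <- Rpower_pow by apply Rpower_pos.
  rewrite Rpower_mult. replace (1/3 * INR 3) with 1 by (simpl; field).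
  apply Rpower_1; auto.
Qed.

Lemma Rpower_cube23 x : 0 < x -> (Rpower x (2/3)) ^ 3 = x ^ 2.
Proof.
  intros H. rewrite <- Rpower_pow by apply Rpower_pos.
  rewrite Rpower_mult. replace (2/3 * INR 3) with (INR 2) by (simpl; field).
  apply Rpower_pow; auto.
Qed.

Lemma cube_le_inv x y : 0 <= y -> x ^ 3 <= y ^ 3 -> x <= y.
Proof.
  intros Hy H. destruct (Rle_lt_dec x y) as [h|h]; auto.
  exfalso. assert (y ^ 3 < x ^ 3).
  { assert (0 < x - y) by lra.
    assert (0 < x*x + x*y + y*y) by nra.
    assert (x^3 - y^3 = (x-y)*(x*x+x*y+y*y)) by ring.
    assert (0 < (x-y)*(x*x+x*y+y*y)) by (apply Rmult_lt_0_compat; lra). lra. }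
  lra.
Qed.

Lemma cube_lt_inv x y : 0 <= y -> x ^ 3 < y ^ 3 -> x < y.
Proof.
  intros Hy H. destruct (Rlt_le_dec x y) as [h|h]; auto.
  exfalso. assert (y ^ 3 <= x ^ 3).
  { assert (0 <= x - y) by lra.
    assert (0 <= x*x + x*y + y*y) by nra.
    assert (x^3 - y^3 = (x-y)*(x*x+x*y+y*y)) by ring.
    assert (0 <= (x-y)*(x*x+x*y+y*y)) by (apply Rmult_le_pos; lra). lra. }
  lra.
Qed.

Lemma cube_inj x y : 0 <= x -> 0 <= y -> x ^ 3 = y ^ 3 -> x = y.
Proof.
  intros Hx Hy H. apply Rle_antisym; apply cube_le_inv; lra.
Qed.

Lemma amgm3 P Q a t : 0 < Q -> 0 < a -> 0 <= t -> 4 * t ^ 3 = P * Q ^ 2 ->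
  3 * t <= P / a ^ 2 + Q * a.
Proof.
  intros HQ Ha Ht H.
  assert (HP : P = 4 * t ^ 3 / Q ^ 2) by (field_simplify_eq; [lra| lra]).
  subst P.
  assert (Key : 0 <= (Q * a - 2 * t) ^ 2 * (Q * a + t)).
  { apply Rmult_le_pos. apply pow2_ge_0. nra. }
  assert (E : 4 * t ^ 3 / Q ^ 2 / a ^ 2 + Q * a - 3 * t
              = (Q * a - 2 * t) ^ 2 * (Q * a + t) / (Q ^ 2 * a ^ 2)).
  { field; lra. }
  assert (0 <= (Q * a - 2 * t) ^ 2 * (Q * a + t) / (Q ^ 2 * a ^ 2)).
  { apply Rdiv_le_0_compat; auto. apply Rmult_lt_0_compat; apply pow_lt; lra. }
  lra.
Qed.

Lemma becker_stark x : 0 < x < PI / 2 ->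
  (PI ^ 2 - 4 * x ^ 2) * sin x <= PI ^ 2 * x * cos x.
Proof.
  intros [H0 H1]. pose proof PI_gt_31. pose proof PI_lt_32.
  destruct (Rle_lt_dec x 1.3) as [Hx|Hx].
  - destruct (cos_bound x 1) as [Hc _]; try lra.
    destruct (sin_bound x 0) as [_ Hs]; try lra.
    unfold cos_approx, sin_approx, cos_term, sin_term in *. simpl in Hc, Hs.
    set (z := x * x) in *.
    assert (Hz : 0 < z <= 1.69).
    { unfold z. split. nra. assert (x*x <= 1.3*1.3) by (apply Rmult_le_compat; lra). lra. }
    set (Q := PI ^ 2).
    assert (HQ : 9.61 <= Q <= 10.24) by (unfold Q; nra).
    assert (E : 0 <= (4 - 2 * z / 3 + z ^ 2 / 30) - Q * (1/3 - z / 30 + z ^ 2 / 720)).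
    { assert (0 <= (10.24 - Q) * (1/3 - z / 30 + z ^ 2 / 720)) by nra. nra. }
    assert (HPQ: 0 <= Q - 4 * x ^ 2) by (unfold Q; nra).
    apply Rle_trans with ((Q - 4 * x ^ 2) * (x - x^3/6 + x^5/120)).
    { apply Rmult_le_compat_l; auto. field_simplify in Hs. field_simplify. lra. }
    apply Rle_trans with (Q * x * (1 - x^2/2 + x^4/24 - x^6/720)).
    + assert (Ex: Q * x * (1 - x^2/2 + x^4/24 - x^6/720) - (Q - 4 * x ^ 2) * (x - x^3/6 + x^5/120)
                = x * z * ((4 - 2 * z / 3 + z ^ 2 / 30) - Q * (1/3 - z / 30 + z ^ 2 / 720))).
      { unfold z, Q. field. }
      assert (0 <= x * z * ((4 - 2 * z / 3 + z ^ 2 / 30) - Q * (1/3 - z / 30 + z ^ 2 / 720))).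
      { apply Rmult_le_pos; auto. apply Rmult_le_pos; lra. }
      lra.
    + apply Rmult_le_compat_l. unfold Q; nra. field_simplify in Hc. field_simplify. lra.
  - set (y := PI / 2 - x).
    assert (Hy : 0 < y <= 0.3) by (unfold y; lra).
    assert (Ecos : cos x = sin y) by (unfold y; rewrite sin_minus, sin_PI2, cos_PI2; ring).
    assert (Esin : sin x = cos y) by (unfold y; rewrite cos_minus, sin_PI2, cos_PI2; ring).
    rewrite Ecos, Esin.
    destruct (sin_bound y 0) as [Hs _]; try lra.
    unfold sin_approx, sin_term in Hs. simpl in Hs.
    assert (Hc : cos y <= 1) by apply COS_bound.
    assert (Hcp : 0 < cos y) by (apply cos_gt_0; lra).
    replace x with (PI / 2 - y) by (unfold y; field).
    replace (PI ^ 2 - 4 * (PI / 2 - y) ^ 2) with (4 * y * (PI - y)) by field.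
    assert (HyP : 0 <= 4 * y * (PI - y)) by nra.
    apply Rle_trans with (4 * y * (PI - y)). 
    { rewrite <- (Rmult_1_r (4 * y * (PI - y))) at 2. apply Rmult_le_compat_l; auto. }
    apply Rle_trans with (PI ^ 2 * (PI / 2 - y) * (y - y^3/6)).
    + assert (q : 0 <= PI ^ 2 * (PI / 2 - y) * (1 - y * y / 6) - 4 * (PI - y)).
      { set (P := PI) in *. assert (HP2: 9.61 <= P^2) by nra.
        assert (Hyy: 0.985 <= 1 - y*y/6) by nra.
        assert (H8: 1.46 <= P^2 * (1 - y*y/6) - 8) by nra.
        assert (1.25 * 1.46 <= (P/2 - y) * (P^2 * (1 - y*y/6) - 8)) by (apply Rmult_le_compat; lra).
        assert (E8: P ^ 2 * (P / 2 - y) * (1 - y * y / 6) - 4 * (P - y) = (P/2 - y) * (P^2 * (1 - y*y/6) - 8) - 4 * y) by field.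
        lra. }
      assert (E : PI ^ 2 * (PI / 2 - y) * (y - y^3/6) - 4 * y * (PI - y)
                = y * (PI ^ 2 * (PI / 2 - y) * (1 - y * y / 6) - 4 * (PI - y))) by field.
      assert (0 <= y * (PI ^ 2 * (PI / 2 - y) * (1 - y * y / 6) - 4 * (PI - y))) by (apply Rmult_le_pos; lra).
      lra.
    + apply Rmult_le_compat_l. apply Rmult_le_pos; [nra|lra].
      field_simplify in Hs. field_simplify. lra.
Qed.


Lemma der_cont f x l : is_derive f x l -> continuity_pt f x.
Proof.
  intros H. apply derivable_continuous_pt. exists l. apply is_derive_Reals. exact H.
Qed.

Lemma mvt_le f df x y : x <= y -> (forall t, x <= t <= y -> is_derive f t (df t)) ->
  exists c, x <= c <= y /\ f y - f x = df c * (y - x).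
Proof.
  intros Hxy H. destruct (Req_dec x y) as [E|E].
  - subst. exists y. split; [lra|ring].
  - destruct (MVT_gen f x y df) as [c [Hc Hf]].
    + intros t Ht. apply H. rewrite Rmin_left, Rmax_right in Ht; lra.
    + intros t Ht. apply der_cont with (df t). apply H. rewrite Rmin_left, Rmax_right in Ht; lra.
    + exists c. rewrite Rmin_left, Rmax_right in Hc by lra. split; auto.
Qed.

Lemma der_mono f df x y : x <= y -> (forall t, x <= t <= y -> is_derive f t (df t)) ->
  (forall t, x <= t <= y -> 0 <= df t) -> f x <= f y.
Proof.
  intros Hxy H Hd. destruct (mvt_le f df x y Hxy H) as [c [Hc E]].
  assert (0 <= df c * (y - x)) by (apply Rmult_le_pos; [apply Hd; auto | lra]). lra.
Qed.

Lemma der_const f df x y : x <= y -> (forall t, x <= t <= y -> is_derive f t (df t)) ->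
  (forall t, x <= t <= y -> df t = 0) -> f x = f y.
Proof.
  intros Hxy H Hd. destruct (mvt_le f df x y Hxy H) as [c [Hc E]].
  rewrite Hd in E by auto. lra.
Qed.

Lemma atan_le_id z : 0 <= z -> atan z <= z.
Proof.
  intros Hz.
  assert (H : forall t, 0 <= t <= z -> is_derive (fun u => u - atan u) t (1 - / (1 + t²))).
  { intros t _. auto_derive; auto. unfold Rsqr. field. nra. }
  pose proof (der_mono (fun u => u - atan u) (fun t => 1 - / (1 + t²)) 0 z Hz H) as M.
  simpl in M. rewrite atan_0 in M.
  assert (M' : 0 - 0 <= z - atan z).
  { apply M. intros t Ht. assert (1 <= 1 + t²) by (unfold Rsqr; nra).
    assert (/ (1 + t²) <= 1). { rewrite <- Rinv_1. apply Rinv_le_contravar; lra. } lra. }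
  lra.
Qed.

Definition gf (b al m : R) : R := m * b + 2 * atan (m / al).

Lemma gf_incr b al x y : 0 <= b -> 0 < al -> x < y -> gf b al x < gf b al y.
Proof.
  intros Hb Hal Hxy. unfold gf.
  assert (atan (x / al) < atan (y / al)).
  { apply atan_increasing. unfold Rdiv. apply Rmult_lt_compat_r; auto. apply Rinv_0_lt_compat; auto. }
  nra.
Qed.

Lemma gf_le_inv b al x y : 0 <= b -> 0 < al -> gf b al x <= gf b al y -> x <= y.
Proof.
  intros Hb Hal H. destruct (Rle_lt_dec x y); auto.
  pose proof (gf_incr b al y x Hb Hal r). lra.
Qed.

Lemma gf_inj b al x y : 0 <= b -> 0 < al -> gf b al x = gf b al y -> x = y.
Proof.
  intros Hb Hal H. apply Rle_antisym; apply (gf_le_inv b al); lra.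
Qed.

Lemma gf_0 b al : gf b al 0 = 0.
Proof. unfold gf. replace (0 / al) with 0 by (unfold Rdiv; ring). rewrite atan_0. ring. Qed.

Definition mu (b al : R) (j : nat) : R :=
  epsilon (inhabits 0) (fun m => gf b al m = INR j * PI).

Lemma mu_exists b al j : 0 < b -> 0 < al -> exists m, gf b al m = INR j * PI.
Proof.
  intros Hb Hal.
  set (f := fun m => gf b al m - INR j * PI).
  assert (Hc : continuity f).
  { intros m. unfold f. apply der_cont with (1 * b + 2 * (1 * / al * / (1 + m * / al * (m * / al * 1))) - 0).
    unfold gf. auto_derive; auto. lra. }
  pose proof PI_RGT_0.
  set (x := (INR j * PI - PI) / b). set (y := (INR j * PI + PI) / b).
  assert (Hxy : x < y) by (unfold x, y; apply Rmult_lt_compat_r; [apply Rinv_0_lt_compat; auto | lra]).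
  assert (Hfx : f x < 0).
  { unfold f, gf. pose proof (atan_bound (x / al)). unfold x in *.
    replace ((INR j * PI - PI) / b * b) with (INR j * PI - PI) by (field; lra). lra. }
  assert (Hfy : 0 < f y).
  { unfold f, gf. pose proof (atan_bound (y / al)). unfold y in *.
    replace ((INR j * PI + PI) / b * b) with (INR j * PI + PI) by (field; lra). lra. }
  destruct (IVT f x y Hc Hxy Hfx Hfy) as [z [_ Hz]].
  exists z. unfold f in Hz. lra.
Qed.

Lemma mu_spec b al j : 0 < b -> 0 < al -> gf b al (mu b al j) = INR j * PI.
Proof.
  intros Hb Hal. unfold mu. apply epsilon_spec. apply mu_exists; auto.
Qed.

Lemma mu_unique b al j m : 0 < b -> 0 < al -> gf b al m = INR j * PI -> m = mu b al j.
Proof.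
  intros Hb Hal H. apply (gf_inj b al); try lra. rewrite H, mu_spec; auto.
Qed.

Lemma mu_0 b al : 0 < b -> 0 < al -> mu b al 0 = 0.
Proof.
  intros Hb Hal. symmetry. apply mu_unique; auto. rewrite gf_0. simpl. ring.
Qed.

Lemma mu_lt b al i j : 0 < b -> 0 < al -> (i < j)%nat -> mu b al i < mu b al j.
Proof.
  intros Hb Hal Hij. destruct (Rlt_le_dec (mu b al i) (mu b al j)) as [h|h]; auto.
  exfalso.
  assert (gf b al (mu b al j) <= gf b al (mu b al i)).
  { destruct h as [h|h]. left. apply gf_incr; auto; lra. rewrite h; lra. }
  rewrite !mu_spec in H by auto.
  apply lt_INR in Hij. pose proof PI_RGT_0. nra.
Qed.

Lemma mu_pos b al j : 0 < b -> 0 < al -> (1 <= j)%nat -> 0 < mu b al j.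
Proof.
  intros Hb Hal Hj. rewrite <- (mu_0 b al) by auto. apply mu_lt; auto.
Qed.

Lemma mu_bounds b al j : 0 < b -> 0 < al -> (1 <= j)%nat ->
  (INR j - 1) * PI / b < mu b al j < INR j * PI / b.
Proof.
  intros Hb Hal Hj. pose proof (mu_pos b al j Hb Hal Hj) as Hp.
  pose proof (mu_spec b al j Hb Hal) as S. unfold gf in S.
  assert (0 < atan (mu b al j / al)).
  { rewrite <- atan_0. apply atan_increasing. apply Rdiv_lt_0_compat; auto. }
  pose proof (atan_bound (mu b al j / al)).
  split.
  - assert (E : mu b al j - (INR j - 1) * PI / b = (mu b al j * b - (INR j - 1) * PI) / b) by (field; lra).
    assert (0 < (mu b al j * b - (INR j - 1) * PI) / b) by (apply Rdiv_lt_0_compat; lra). lra.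
  - assert (E : INR j * PI / b - mu b al j = (INR j * PI - mu b al j * b) / b) by (field; lra).
    assert (0 < (INR j * PI - mu b al j * b) / b) by (apply Rdiv_lt_0_compat; lra). lra.
Qed.

Lemma der_mult (f g : R -> R) (x df dg : R) : is_derive f x df -> is_derive g x dg ->
  is_derive (fun t => f t * g t) x (df * g x + f x * dg).
Proof.
  intros Hf Hg. apply (is_derive_mult f g x df dg Hf Hg). intros; apply Rmult_comm.
Qed.

Lemma der_minus (f g : R -> R) (x df dg : R) : is_derive f x df -> is_derive g x dg ->
  is_derive (fun t => f t - g t) x (df - dg).
Proof. intros Hf Hg. apply (is_derive_minus f g x df dg Hf Hg). Qed.

Lemma der_plus (f g : R -> R) (x df dg : R) : is_derive f x df -> is_derive g x dg ->
  is_derive (fun t => f t + g t) x (df + dg).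
Proof. intros Hf Hg. apply (is_derive_plus f g x df dg Hf Hg). Qed.

Lemma der_eq (f : R -> R) (x l l' : R) : is_derive f x l -> l = l' -> is_derive f x l'.
Proof. intros H E; subst; auto. Qed.

Lemma F_id b al m : 0 < al ->
  (al ^ 2 - m ^ 2) * sin (m * b) + 2 * al * m * cos (m * b)
  = (al ^ 2 + m ^ 2) * sin (gf b al m).
Proof.
  intros Hal. unfold gf.
  set (t := m / al).
  assert (Ht1 : 0 < 1 + t²) by (unfold Rsqr; nra).
  set (s := sqrt (1 + t²)).
  assert (Hs : s * s = 1 + t²) by (apply sqrt_sqrt; lra).
  assert (Hsp : 0 < s) by (apply sqrt_lt_R0; lra).
  rewrite sin_plus, sin_2a, cos_2a, sin_atan, cos_atan. fold s.
  assert (K1 : 1 / s * (1 / s) - t / s * (t / s) = (al ^ 2 - m ^ 2) / (al ^ 2 + m ^ 2)).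
  { replace (1 / s * (1 / s) - t / s * (t / s)) with ((1 - t * t) / (s * s)) by (field; lra).
    rewrite Hs. unfold t, Rsqr. field. split; [|lra]. nra. }
  assert (K2 : 2 * (t / s) * (1 / s) = 2 * al * m / (al ^ 2 + m ^ 2)).
  { replace (2 * (t / s) * (1 / s)) with (2 * t / (s * s)) by (field; lra).
    rewrite Hs. unfold t, Rsqr. field. split; [|lra]. nra. }
  rewrite K1, K2. field. nra.
Qed.

Lemma eig_pos b al lam : 0 < b -> 0 < al -> robin_eigenvalue b al lam -> 0 < lam.
Proof.
  intros Hb Hal [u [u' [Hd [[x0 [Hx0 Hux0]] [R0 Rb]]]]].
  destruct (Rlt_le_dec 0 lam) as [h|h]; auto. exfalso.
  set (G := fun x => u x * u' x).
  assert (HG : forall t, 0 <= t <= b -> is_derive G t (u' t * u' t + u t * (- lam * u t))).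
  { intros t Ht. destruct (Hd t Ht). apply der_mult; auto. }
  assert (HGp : forall t, 0 <= t <= b -> 0 <= u' t * u' t + u t * (- lam * u t)).
  { intros t _. nra. }
  assert (G0 : G 0 = al * (u 0 * u 0)) by (unfold G; replace (u' 0) with (al * u 0) by lra; ring).
  assert (Gb : G b = - al * (u b * u b)) by (unfold G; replace (u' b) with (- al * u b) by lra; ring).
  assert (Hmon : forall t, 0 <= t <= b -> G 0 <= G t /\ G t <= G b).
  { intros t Ht. split.
    - apply (der_mono G (fun t => u' t * u' t + u t * (- lam * u t)) 0 t); try lra; intros; [apply HG | apply HGp]; lra.
    - apply (der_mono G (fun t => u' t * u' t + u t * (- lam * u t)) t b); try lra; intros; [apply HG | apply HGp]; lra. }
  assert (Hz : forall t, 0 <= t <= b -> G t = 0).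
  { intros t Ht. destruct (Hmon t Ht). assert (0 <= u 0 * u 0) by nra. assert (0 <= u b * u b) by nra. nra. }
  assert (Hu0 : u 0 * u 0 = 0).
  { pose proof (Hz 0 ltac:(lra)). rewrite G0 in H. nra. }
  assert (Hsq : u 0 * u 0 = u x0 * u x0).
  { apply (der_const (fun t => u t * u t) (fun t => u' t * u t + u t * u' t) 0 x0); try lra.
    - intros t Ht. destruct (Hd t ltac:(lra)). apply der_mult; auto.
    - intros t Ht. pose proof (Hz t ltac:(lra)). unfold G in H. lra. }
  apply Hux0. nra.
Qed.

Lemma eig_F b al lam : 0 < b -> 0 < al -> robin_eigenvalue b al lam ->
  sin (gf b al (sqrt lam)) = 0.
Proof.
  intros Hb Hal Heig. pose proof (eig_pos b al lam Hb Hal Heig) as Hlam.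
  destruct Heig as [u [u' [Hd [[x0 [Hx0 Hux0]] [R0 Rb]]]]].
  set (m := sqrt lam).
  assert (Hm : m * m = lam) by (apply sqrt_sqrt; lra).
  assert (Hmp : 0 < m) by (apply sqrt_lt_R0; lra).
  set (F := (al ^ 2 - m ^ 2) * sin (m * b) + 2 * al * m * cos (m * b)).
  assert (HF : F = 0).
  { destruct (Req_dec F 0) as [E|E]; auto. exfalso.
    set (v := fun t => m * cos (m * t) + al * sin (m * t)).
    set (v' := fun t => - m ^ 2 * sin (m * t) + al * m * cos (m * t)).
    assert (Hv : forall t, is_derive v t (v' t)).
    { intros t. unfold v, v'. auto_derive; auto. ring. }
    assert (Hv' : forall t, is_derive v' t (- lam * v t)).
    { intros t. unfold v, v'. auto_derive; auto. rewrite <- Hm. ring. }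
    set (W := fun t => u t * v' t - u' t * v t).
    assert (HW : W 0 = W b).
    { apply (der_const W (fun _ => 0) 0 b); try lra.
      intros t Ht. destruct (Hd t Ht) as [D1 D2].
      unfold W. eapply der_eq. { apply der_minus; apply der_mult; [exact D1|apply Hv'|exact D2|apply Hv]. }
      ring. intros; reflexivity. }
    assert (W0 : W 0 = 0).
    { unfold W, v, v'. rewrite Rmult_0_r, sin_0, cos_0. replace (u' 0) with (al * u 0) by lra. ring. }
    assert (Wb : W b = u b * F).
    { unfold W, v, v', F. replace (u' b) with (- al * u b) by lra. ring. }
    assert (Hub : u b = 0).
    { rewrite HW, Wb in W0. destruct (Rmult_integral _ _ W0); auto. contradiction. }
    assert (Hub' : u' b = 0) by (rewrite Hub in Rb; lra).
    set (En := fun t => u' t * u' t + lam * (u t * u t)).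
    assert (HE : En x0 = En b).
    { apply (der_const En (fun _ => 0) x0 b); try lra.
      - intros t Ht. destruct (Hd t ltac:(lra)) as [D1 D2].
        unfold En. eapply der_eq.
        { apply der_plus. apply der_mult; eauto.
          apply (is_derive_scal (fun t => u t * u t) t lam). apply der_mult; eauto. }
        simpl. unfold mult; simpl. ring.
      - intros; reflexivity. }
    unfold En in HE. rewrite Hub, Hub' in HE.
    assert (0 <= u' x0 * u' x0) by nra. assert (0 < u x0 * u x0) by (apply Rsqr_pos_lt in Hux0; unfold Rsqr in Hux0; lra).
    nra. }
  assert (Hg : (al ^ 2 + m ^ 2) * sin (gf b al m) = 0) by (rewrite <- F_id; auto).
  destruct (Rmult_integral _ _ Hg) as [h|h]; auto.
  exfalso. nra.
Qed.

Lemma eig_iff b al lam : 0 < b -> 0 < al ->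
  (robin_eigenvalue b al lam <-> exists j, (1 <= j)%nat /\ lam = mu b al j ^ 2).
Proof.
  intros Hb Hal. split.
  - intros Heig. pose proof (eig_pos b al lam Hb Hal Heig) as Hlam.
    pose proof (eig_F b al lam Hb Hal Heig) as HS.
    set (m := sqrt lam) in *.
    assert (Hm : m * m = lam) by (apply sqrt_sqrt; lra).
    assert (Hmp : 0 < m) by (apply sqrt_lt_R0; lra).
    destruct (sin_eq_0_0 _ HS) as [z Hz].
    assert (Hg : 0 < gf b al m) by (rewrite <- (gf_0 b al); apply gf_incr; lra).
    assert (Hz1 : (1 <= z)%Z).
    { rewrite Hz in Hg. pose proof PI_RGT_0.
      assert (0 < IZR z) by (apply (Rmult_lt_reg_r PI); lra).
      apply lt_IZR in H0. lia. }
    exists (Z.to_nat z). split; [lia|].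
    assert (E : INR (Z.to_nat z) = IZR z).
    { rewrite INR_IZR_INZ. f_equal. lia. }
    rewrite <- (mu_unique b al (Z.to_nat z) m); auto.
    + rewrite <- Hm. ring.
    + rewrite E. auto.
  - intros [j [Hj E]].
    set (m := mu b al j) in *.
    assert (Hmp : 0 < m) by (apply mu_pos; auto).
    assert (Hs : sin (gf b al m) = 0).
    { unfold m. rewrite mu_spec by auto. apply sin_eq_0_1. exists (Z.of_nat j). rewrite <- INR_IZR_INZ. auto. }
    exists (fun t => m * cos (m * t) + al * sin (m * t)).
    exists (fun t => - m ^ 2 * sin (m * t) + al * m * cos (m * t)).
    split; [|split; [|split]].
    + intros x _. split.
      * auto_derive; auto. ring.
      * auto_derive; auto. rewrite E. ring.
    + exists 0. split; [lra|]. rewrite Rmult_0_r, sin_0, cos_0. lra.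
    + rewrite Rmult_0_r, sin_0, cos_0. ring.
    + pose proof (F_id b al m Hal) as HF. rewrite Hs, Rmult_0_r in HF.
      rewrite <- HF. ring.
Qed.


Lemma mu_nonneg b al j : 0 < b -> 0 < al -> 0 <= mu b al j.
Proof.
  intros Hb Hal. destruct j. rewrite mu_0; auto; lra. left; apply mu_pos; auto; lia.
Qed.

Lemma mu_sq_lt b al i j : 0 < b -> 0 < al -> (i < j)%nat -> mu b al i ^ 2 < mu b al j ^ 2.
Proof.
  intros Hb Hal H. pose proof (mu_lt b al i j Hb Hal H). pose proof (mu_nonneg b al i Hb Hal). nra.
Qed.

Lemma mu_sq_lt_inv b al i j : 0 < b -> 0 < al -> mu b al i ^ 2 < mu b al j ^ 2 -> (i < j)%nat.
Proof.
  intros Hb Hal H. destruct (Nat.lt_ge_cases i j) as [h|h]; auto.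
  exfalso. destruct (Nat.eq_dec i j). subst; lra.
  assert (j < i)%nat by lia. pose proof (mu_sq_lt b al j i Hb Hal H0). lra.
Qed.

Lemma NoDup_same_length {A} (l1 l2 : list A) : NoDup l1 -> NoDup l2 ->
  (forall x, In x l1 <-> In x l2) -> length l1 = length l2.
Proof.
  intros N1 N2 H. apply Nat.le_antisymm; apply NoDup_incl_length; auto; intros x Hx; apply H; auto.
Qed.

Definition Lst b al j := map (fun i => mu b al i ^ 2) (seq 1 (j - 1)).

Lemma Lst_NoDup b al j : 0 < b -> 0 < al -> NoDup (Lst b al j).
Proof.
  intros Hb Hal. apply Injective_map_NoDup; [|apply seq_NoDup].
  intros i i' E. destruct (Nat.lt_total i i') as [h|[h|h]]; auto.
  - pose proof (mu_sq_lt b al i i' Hb Hal h). lra.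
  - pose proof (mu_sq_lt b al i' i Hb Hal h). lra.
Qed.

Lemma Lst_In b al j x : 0 < b -> 0 < al -> (1 <= j)%nat ->
  (In x (Lst b al j) <-> robin_eigenvalue b al x /\ x < mu b al j ^ 2).
Proof.
  intros Hb Hal Hj. unfold Lst. rewrite in_map_iff. split.
  - intros [i [E Hi]]. apply in_seq in Hi. subst x. split.
    + apply eig_iff; auto. exists i; split; auto; lia.
    + apply mu_sq_lt; auto; lia.
  - intros [He Hlt]. apply eig_iff in He; auto. destruct He as [i [Hi E]]. subst x.
    exists i. split; auto. apply in_seq. apply mu_sq_lt_inv in Hlt; auto. lia.
Qed.

Lemma Lst_length b al j : length (Lst b al j) = (j - 1)%nat.
Proof. unfold Lst. rewrite length_map, length_seq. reflexivity. Qed.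

Lemma kth_mu b al k : 0 < b -> 0 < al -> (1 <= k)%nat ->
  is_kth_robin_eigenvalue b al k (mu b al k ^ 2).
Proof.
  intros Hb Hal Hk. split.
  - apply eig_iff; auto. exists k; split; auto.
  - exists (Lst b al k). split; [apply Lst_NoDup; auto|]. split; [apply Lst_length|].
    intros m. apply Lst_In; auto.
Qed.

Lemma kth_unique b al k lam : 0 < b -> 0 < al -> (1 <= k)%nat ->
  is_kth_robin_eigenvalue b al k lam -> lam = mu b al k ^ 2.
Proof.
  intros Hb Hal Hk [He [l [Hl [Hlen Hmem]]]].
  apply eig_iff in He; auto. destruct He as [j [Hj E]]. subst lam.
  assert (length l = length (Lst b al j)).
  { apply NoDup_same_length; auto. apply Lst_NoDup; auto.
    intros x. rewrite Hmem, Lst_In; auto. reflexivity. }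
  rewrite Lst_length, Hlen in H. assert (j = k) by lia. subst; auto.
Qed.

Lemma robin_ev_eq b al k : 0 < b -> 0 < al -> (1 <= k)%nat -> robin_ev b al k = mu b al k ^ 2.
Proof.
  intros Hb Hal Hk. unfold robin_ev. apply kth_unique; auto.
  apply epsilon_spec. exists (mu b al k ^ 2). apply kth_mu; auto.
Qed.


Lemma mu1_facts b al : 0 < b -> 0 < al ->
  let m := mu b al 1 in
  0 < m /\ m * b < PI /\ atan (al / m) = m * b / 2.
Proof.
  intros Hb Hal m.
  assert (Hm : 0 < m) by (apply mu_pos; auto).
  destruct (mu_bounds b al 1 Hb Hal (le_n 1)) as [_ Hu]. fold m in Hu.
  simpl INR in Hu.
  assert (Hmb : m * b < PI).
  { assert (E : PI - m * b = (1 * PI / b - m) * b) by (field; lra).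
    assert (0 < (1 * PI / b - m) * b) by (apply Rmult_lt_0_compat; lra). lra. }
  split; [auto|split; [auto|]].
  pose proof (mu_spec b al 1 Hb Hal) as S. fold m in S. unfold gf in S. simpl INR in S.
  replace (al / m) with (/ (m / al)) by (field; lra).
  rewrite atan_inv by (apply Rdiv_lt_0_compat; auto). lra.
Qed.

Lemma mu1_upper b al : 0 < b -> 0 < al -> mu b al 1 ^ 2 * b <= 2 * al.
Proof.
  intros Hb Hal. destruct (mu1_facts b al Hb Hal) as [Hm [Hmb Ha]].
  set (m := mu b al 1) in *.
  pose proof (atan_le_id (al / m) ltac:(left; apply Rdiv_lt_0_compat; auto)) as H.
  rewrite Ha in H.
  assert (m * b / 2 * m <= al / m * m) by (apply Rmult_le_compat_r; lra).
  replace (al / m * m) with al in H0 by (field; lra). nra.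
Qed.

Lemma mu1_lower b al : 0 < b -> 0 < al ->
  2 * PI ^ 2 * al <= mu b al 1 ^ 2 * (b * (PI ^ 2 + 2 * al * b)).
Proof.
  intros Hb Hal. destruct (mu1_facts b al Hb Hal) as [Hm [Hmb Ha]].
  set (m := mu b al 1) in *.
  set (x := m * b / 2) in *.
  assert (Hx : 0 < x < PI / 2) by (unfold x; split; nra).
  assert (Hc : 0 < cos x) by (apply cos_gt_0; lra).
  assert (Ht : sin x = al / m * cos x).
  { pose proof (tan_atan (al / m)) as T. rewrite Ha in T. fold x in T.
    unfold tan in T. rewrite <- T. field. lra. }
  pose proof (becker_stark x Hx) as BS. rewrite Ht in BS.
  assert (BS2 : (PI ^ 2 - 4 * x ^ 2) * (al / m) <= PI ^ 2 * x).
  { apply Rmult_le_reg_r with (cos x); auto. lra. }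
  assert (BS3 : (PI ^ 2 - 4 * x ^ 2) * al <= PI ^ 2 * x * m).
  { replace ((PI ^ 2 - 4 * x ^ 2) * al) with ((PI ^ 2 - 4 * x ^ 2) * (al / m) * m) by (field; lra).
    apply Rmult_le_compat_r; lra. }
  unfold x in BS3. nra.
Qed.

Lemma mu_cont b al j : 0 < b -> 0 < al -> continuity_pt (fun b' => mu b' al j) b.
Proof.
  intros Hb Hal. unfold continuity_pt, continue_in, limit1_in, limit_in. simpl.
  intros eps Heps.
  set (m := mu b al j).
  set (e := eps / 2).
  assert (He : 0 < e) by (unfold e; lra).
  set (dp := gf b al (m + e) - INR j * PI).
  set (dm := INR j * PI - gf b al (m - e)).
  assert (Hdp : 0 < dp).
  { unfold dp. rewrite <- (mu_spec b al j Hb Hal). fold m. pose proof (gf_incr b al m (m + e)). lra. }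
  assert (Hdm : 0 < dm).
  { unfold dm. rewrite <- (mu_spec b al j Hb Hal). fold m. pose proof (gf_incr b al (m - e) m). lra. }
  set (d := Rmin dp dm).
  assert (Hd : 0 < d) by (unfold d; apply Rmin_pos; auto).
  assert (HM : 0 < Rabs m + e) by (pose proof (Rabs_pos m); lra).
  exists (Rmin b (d / (Rabs m + e))). split.
  { apply Rlt_gt, Rmin_pos; auto. apply Rdiv_lt_0_compat; auto. }
  intros x [_ Hx]. unfold Rdist in *.
  assert (Hx1 : Rabs (x - b) < b) by (eapply Rlt_le_trans; [exact Hx| apply Rmin_l]).
  assert (Hx2 : Rabs (x - b) < d / (Rabs m + e)) by (eapply Rlt_le_trans; [exact Hx| apply Rmin_r]).
  assert (Hxp : 0 < x) by (apply Rabs_def2 in Hx1; lra).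
  assert (Hx3 : Rabs (x - b) * (Rabs m + e) < d).
  { apply Rmult_lt_reg_r with (/ (Rabs m + e)). apply Rinv_0_lt_compat; auto.
    rewrite Rmult_assoc, Rinv_r, Rmult_1_r by lra. exact Hx2. }
  assert (Hdiff : forall z, Rabs z <= Rabs m + e -> Rabs (gf x al z - gf b al z) < d).
  { intros z Hz. unfold gf. replace (z * x + 2 * atan (z / al) - (z * b + 2 * atan (z / al))) with (z * (x - b)) by ring.
    rewrite Rabs_mult. 
    apply Rle_lt_trans with (Rabs (x - b) * (Rabs m + e)); auto.
    rewrite Rmult_comm. apply Rmult_le_compat_l; auto. apply Rabs_pos. }
  assert (Dp := Hdiff (m + e) ltac:(eapply Rle_trans; [apply Rabs_triang|]; rewrite (Rabs_right e) by lra; lra)).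
  assert (Dm := Hdiff (m - e) ltac:(unfold Rminus; eapply Rle_trans; [apply Rabs_triang|]; rewrite Rabs_Ropp, (Rabs_right e) by lra; lra)).
  assert (dp <= d -> False -> True) by auto.
  assert (Hd1 : d <= dp) by apply Rmin_l. assert (Hd2 : d <= dm) by apply Rmin_r.
  apply Rabs_def2 in Dp. apply Rabs_def2 in Dm.
  pose proof (mu_spec x al j Hxp Hal) as Sx.
  assert (U : mu x al j < m + e).
  { destruct (Rlt_le_dec (mu x al j) (m + e)) as [h|h]; auto. exfalso.
    assert (gf x al (m + e) <= gf x al (mu x al j)).
    { destruct h as [h|h]. left; apply gf_incr; lra. rewrite h; lra. }
    unfold dp in Hd1. lra. }
  assert (L : m - e < mu x al j).
  { destruct (Rlt_le_dec (m - e) (mu x al j)) as [h|h]; auto. exfalso.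
    assert (gf x al (mu x al j) <= gf x al (m - e)).
    { destruct h as [h|h]. left; apply gf_incr; lra. rewrite h; lra. }
    unfold dm in Hd2. lra. }
  apply Rabs_def1; unfold e in *; lra.
Qed.


Definition Fm (A al : R) (k : nat) (a : R) : R :=
  mu (sqrt A * a) al k ^ 2 + mu (sqrt A / a) al 1 ^ 2.

Lemma Lam_eq A al k a : 0 < A -> 0 < al -> (1 <= k)%nat -> 0 < a ->
  Lam_fun A al k a = Fm A al k a.
Proof.
  intros HA Hal Hk Ha. assert (Hs : 0 < sqrt A) by (apply sqrt_lt_R0; auto).
  assert (0 < sqrt A * a) by (apply Rmult_lt_0_compat; auto).
  assert (0 < sqrt A / a) by (apply Rdiv_lt_0_compat; auto).
  unfold Lam_fun, Fm. rewrite !robin_ev_eq; auto.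
Qed.

Definition Qc (A al eta : R) : R := 2 * PI ^ 2 * al / (sqrt A * (PI ^ 2 + 2 * al * eta)).

Lemma Qc_pos A al eta : 0 < A -> 0 < al -> 0 <= eta -> 0 < Qc A al eta.
Proof.
  intros HA Hal He. assert (Hs : 0 < sqrt A) by (apply sqrt_lt_R0; auto).
  pose proof PI_RGT_0. assert (0 < PI ^ 2) by (apply pow_lt; lra).
  unfold Qc. apply Rdiv_lt_0_compat. apply Rmult_lt_0_compat; lra.
  apply Rmult_lt_0_compat; auto. nra.
Qed.

Lemma Fm_lower A al k a eta : 0 < A -> 0 < al -> (1 <= k)%nat -> 0 < a ->
  sqrt A / a <= eta ->
  (INR k - 1) ^ 2 * PI ^ 2 / A / a ^ 2 + Qc A al eta * a <= Fm A al k a.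
Proof.
  intros HA Hal Hk Ha Heta.
  assert (Hs : 0 < sqrt A) by (apply sqrt_lt_R0; auto).
  assert (Hss : sqrt A * sqrt A = A) by (apply sqrt_sqrt; lra).
  pose proof PI_RGT_0. assert (HP2 : 0 < PI ^ 2) by (apply pow_lt; lra).
  assert (Hl : 0 < sqrt A / a) by (apply Rdiv_lt_0_compat; auto).
  assert (Hb : 0 < sqrt A * a) by (apply Rmult_lt_0_compat; auto).
  unfold Fm. apply Rplus_le_compat.
  - destruct (mu_bounds (sqrt A * a) al k Hb Hal Hk) as [H1 _].
    assert (Hk1 : 0 <= INR k - 1) by (apply le_INR in Hk; simpl in Hk; lra).
    assert (H0 : 0 <= (INR k - 1) * PI / (sqrt A * a)).
    { apply Rdiv_le_0_compat; nra. }
    replace ((INR k - 1) ^ 2 * PI ^ 2 / A / a ^ 2) with (((INR k - 1) * PI / (sqrt A * a)) ^ 2)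
      by (set (s := sqrt A) in *; rewrite <- Hss; field; lra).
    apply pow_incr. lra.
  - pose proof (mu1_lower (sqrt A / a) al Hl Hal) as L.
    set (m2 := mu (sqrt A / a) al 1 ^ 2) in *.
    assert (Hden : 0 < sqrt A / a * (PI ^ 2 + 2 * al * (sqrt A / a))) by (apply Rmult_lt_0_compat; nra).
    assert (Hm : 2 * PI ^ 2 * al / (sqrt A / a * (PI ^ 2 + 2 * al * (sqrt A / a))) <= m2).
    { apply Rmult_le_reg_r with (sqrt A / a * (PI ^ 2 + 2 * al * (sqrt A / a))); auto.
      unfold Rdiv at 1. rewrite Rmult_assoc, Rinv_l, Rmult_1_r by lra. lra. }
    eapply Rle_trans; [|exact Hm].
    unfold Qc.
    replace (2 * PI ^ 2 * al / (sqrt A / a * (PI ^ 2 + 2 * al * (sqrt A / a))))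
      with (2 * PI ^ 2 * al / (sqrt A * (PI ^ 2 + 2 * al * (sqrt A / a))) * a) by (field; split; nra).
    apply Rmult_le_compat_r; [lra|].
    unfold Rdiv. apply Rmult_le_compat_l. nra.
    apply Rinv_le_contravar. nra. apply Rmult_le_compat_l; nra.
Qed.

Lemma Fm_upper A al k a : 0 < A -> 0 < al -> (1 <= k)%nat -> 0 < a ->
  Fm A al k a <= (INR k * PI / (sqrt A * a)) ^ 2 + 2 * al * a / sqrt A.
Proof.
  intros HA Hal Hk Ha.
  assert (Hs : 0 < sqrt A) by (apply sqrt_lt_R0; auto).
  assert (Hl : 0 < sqrt A / a) by (apply Rdiv_lt_0_compat; auto).
  assert (Hb : 0 < sqrt A * a) by (apply Rmult_lt_0_compat; auto).
  unfold Fm. apply Rplus_le_compat.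
  - destruct (mu_bounds (sqrt A * a) al k Hb Hal Hk) as [_ H1].
    pose proof (mu_pos (sqrt A * a) al k Hb Hal Hk).
    apply pow_incr. lra.
  - pose proof (mu1_upper (sqrt A / a) al Hl Hal) as U.
    apply Rmult_le_reg_r with (sqrt A / a); auto.
    replace (2 * al * a / sqrt A * (sqrt A / a)) with (2 * al) by (field; lra). lra.
Qed.

Lemma glb_le A al k a : 1 <= a -> Rbar_le (LambdaK1 A al k) (Finite (Lam_fun A al k a)).
Proof.
  intros Ha. unfold LambdaK1. destruct (Glb_Rbar_correct (fun x => exists a, 1 <= a /\ x = Lam_fun A al k a)) as [H _].
  apply H. exists a; auto.
Qed.

Lemma glb_ge A al k c : (forall a, 1 <= a -> c <= Lam_fun A al k a) -> Rbar_le (Finite c) (LambdaK1 A al k).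
Proof.
  intros Hc. unfold LambdaK1. destruct (Glb_Rbar_correct (fun x => exists a, 1 <= a /\ x = Lam_fun A al k a)) as [_ H].
  apply H. intros x [a [Ha E]]. subst x. simpl. apply Hc; auto.
Qed.

Lemma glb_attained A al k a0 : 1 <= a0 -> (forall a, 1 <= a -> Lam_fun A al k a0 <= Lam_fun A al k a) ->
  LambdaK1 A al k = Finite (Lam_fun A al k a0).
Proof.
  intros Ha0 H. unfold LambdaK1. apply is_glb_Rbar_unique. split.
  - intros x [a [Ha E]]. subst x. simpl. apply H; auto.
  - intros b Hb. apply Hb. exists a0; auto.
Qed.


Lemma Fm_nonneg A al k a : Fm A al k a >= 0.
Proof. unfold Fm. pose proof (pow2_ge_0 (mu (sqrt A * a) al k)). pose proof (pow2_ge_0 (mu (sqrt A / a) al 1)). lra. Qed.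

Lemma part1 A al k : 0 < A -> 0 < al -> (2 <= k)%nat ->
  Rbar_le
       (Finite (3 * PI ^ 2 * rpow al (2/3)
                / (rpow (PI ^ 2 + 2 * sqrt A * al) (2/3) * rpow A (2/3))
                * rpow (INR k - 2) (2/3)))
       (LambdaK1 A al k).
Proof.
  intros HA Hal Hk.
  assert (Hs : 0 < sqrt A) by (apply sqrt_lt_R0; auto).
  assert (Hss : sqrt A * sqrt A = A) by (apply sqrt_sqrt; lra).
  pose proof PI_RGT_0. assert (HP2 : 0 < PI ^ 2) by (apply pow_lt; lra).
  set (D := PI ^ 2 + 2 * sqrt A * al).
  assert (HD : 0 < D) by (unfold D; nra).
  set (T := 3 * PI ^ 2 * rpow al (2/3) / (rpow D (2/3) * rpow A (2/3)) * rpow (INR k - 2) (2/3)).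
  assert (Hk2 : 0 <= INR k - 2) by (apply le_INR in Hk; simpl in Hk; lra).
  assert (Ht : 4 * (T / 3) ^ 3 = (INR k - 2) ^ 2 * PI ^ 2 / A * Qc A al (sqrt A) ^ 2
               /\ 0 <= T / 3).
  { destruct Hk2 as [Hk2|Hk2].
    - unfold T. rewrite !rpow_eq by auto.
      pose proof (Rpower_pos al (2/3)). pose proof (Rpower_pos D (2/3)).
      pose proof (Rpower_pos A (2/3)). pose proof (Rpower_pos (INR k - 2) (2/3)).
      split.
      + replace ((3 * PI ^ 2 * Rpower al (2 / 3) / (Rpower D (2 / 3) * Rpower A (2 / 3)) *
                Rpower (INR k - 2) (2 / 3) / 3) ^ 3)
          with (PI ^ 6 * Rpower al (2 / 3) ^ 3 * Rpower (INR k - 2) (2 / 3) ^ 3 /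
                (Rpower D (2 / 3) ^ 3 * Rpower A (2 / 3) ^ 3)) by (field; lra).
        rewrite !Rpower_cube23 by auto.
        unfold Qc. unfold D. set (s := sqrt A) in *. rewrite <- Hss. field.
        split; nra.
      + apply Rmult_le_pos; [|lra]. left. apply Rmult_lt_0_compat; auto.
        apply Rdiv_lt_0_compat. apply Rmult_lt_0_compat; lra. apply Rmult_lt_0_compat; auto.
    - unfold T. rewrite <- Hk2, rpow_zero. split; [|lra].
      rewrite !rpow_eq by auto. pose proof (Rpower_pos D (2/3)). pose proof (Rpower_pos A (2/3)).
      field. repeat split; lra. }
  destruct Ht as [Ht Ht0].
  apply glb_ge. intros a Ha.
  rewrite Lam_eq by (auto; lia || lra).
  assert (HQ : 0 < Qc A al (sqrt A)) by (apply Qc_pos; lra).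
  eapply Rle_trans; [|apply (Fm_lower A al k a (sqrt A)); auto; try lia; try lra].
  2: { apply Rmult_le_reg_r with a; [lra|]. unfold Rdiv. rewrite Rmult_assoc, Rinv_l, Rmult_1_r by lra.
       rewrite <- (Rmult_1_r (sqrt A)) at 1. apply Rmult_le_compat_l; lra. }
  eapply Rle_trans.
  { replace T with (3 * (T / 3)) by field.
    apply (amgm3 ((INR k - 2) ^ 2 * PI ^ 2 / A) (Qc A al (sqrt A)) a (T / 3)); auto; lra. }
  apply Rplus_le_compat_r.
  unfold Rdiv. apply Rmult_le_compat_r. left; apply Rinv_0_lt_compat, pow_lt; lra.
  apply Rmult_le_compat_r. left; apply Rinv_0_lt_compat; lra.
  apply Rmult_le_compat_r. lra.
  apply pow_incr. lra.
Qed.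

Lemma upper_point A al k : 0 < A -> 0 < al -> (2 <= k)%nat ->
  al <= PI ^ 2 / sqrt A * INR k ^ 2 ->
  exists a, 1 <= a /\ Lam_fun A al k a <= 3 * rpow (PI * al / A) (2/3) * rpow (INR k) (2/3).
Proof.
  intros HA Hal Hk Hcond.
  assert (Hs : 0 < sqrt A) by (apply sqrt_lt_R0; auto).
  assert (Hss : sqrt A * sqrt A = A) by (apply sqrt_sqrt; lra).
  pose proof PI_RGT_0. assert (HP2 : 0 < PI ^ 2) by (apply pow_lt; lra).
  assert (Hkp : 2 <= INR k) by (apply le_INR in Hk; simpl in Hk; lra).
  set (X := INR k ^ 2 * PI ^ 2 / (sqrt A * al)).
  assert (HX : 1 <= X).
  { unfold X. apply Rmult_le_reg_r with (sqrt A * al). nra.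
    unfold Rdiv. rewrite Rmult_assoc, Rinv_l, Rmult_1_r, Rmult_1_l by nra.
    apply Rmult_le_compat_l with (r := sqrt A) in Hcond; [|lra].
    replace (sqrt A * (PI ^ 2 / sqrt A * INR k ^ 2)) with (INR k ^ 2 * PI ^ 2) in Hcond by (field; lra). lra. }
  set (a := Rpower X (1/3)).
  assert (Ha3 : a ^ 3 = X) by (apply Rpower_cube13; lra).
  assert (Hap : 0 < a) by apply Rpower_pos.
  assert (Ha1 : 1 <= a) by (apply cube_le_inv; lra).
  exists a. split; auto.
  rewrite Lam_eq by (auto; lia || lra).
  eapply Rle_trans; [apply Fm_upper; auto; lia|].
  assert (E1 : (INR k * PI / (sqrt A * a)) ^ 2 = al * a / sqrt A).
  { apply Rmult_eq_reg_r with (a ^ 2). 2: nra.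
    replace (al * a / sqrt A * a ^ 2) with (al * a ^ 3 / sqrt A) by (field; lra).
    rewrite Ha3. unfold X. field. split; lra. }
  rewrite E1.
  rewrite !rpow_eq by (try apply Rdiv_lt_0_compat; try apply Rmult_lt_0_compat; lra).
  assert (E2 : al * a / sqrt A = Rpower (PI * al / A) (2 / 3) * Rpower (INR k) (2 / 3)).
  { apply cube_inj.
    - left. apply Rdiv_lt_0_compat; nra.
    - left. apply Rmult_lt_0_compat; apply Rpower_pos.
    - rewrite Rpow_mult_distr, !Rpower_cube23 by (try apply Rdiv_lt_0_compat; try apply Rmult_lt_0_compat; lra).
      replace ((al * a / sqrt A) ^ 3) with (al ^ 3 * a ^ 3 / (sqrt A * sqrt A * sqrt A)) by (field; lra).
      rewrite Ha3. unfold X. set (s := sqrt A) in *. rewrite <- Hss. field. split; lra. }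
  rewrite (Rmult_assoc 3), <- E2. right. field. lra.
Qed.

Lemma part2 A al k : 0 < A -> 0 < al -> (2 <= k)%nat ->
  al <= PI ^ 2 / sqrt A * INR k ^ 2 ->
  Rbar_le (LambdaK1 A al k) (Finite (3 * rpow (PI * al / A) (2/3) * rpow (INR k) (2/3))).
Proof.
  intros HA Hal Hk Hc. destruct (upper_point A al k HA Hal Hk Hc) as [a [Ha H]].
  eapply Rbar_le_trans. apply (glb_le A al k a Ha). simpl. exact H.
Qed.

Lemma Fm_cont A al k c : 0 < A -> 0 < al -> 0 < c -> continuity_pt (Fm A al k) c.
Proof.
  intros HA Hal Hc.
  assert (Hs : 0 < sqrt A) by (apply sqrt_lt_R0; auto).
  assert (C1 : continuity_pt (fun a => mu (sqrt A * a) al k) c).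
  { apply continuity_pt_ext with (comp (fun b => mu b al k) (fun a => sqrt A * a)).
    { intros; reflexivity. }
    apply continuity_pt_comp.
    - apply der_cont with (sqrt A). auto_derive; auto. ring.
    - apply mu_cont; auto. apply Rmult_lt_0_compat; auto. }
  assert (C2 : continuity_pt (fun a => mu (sqrt A / a) al 1) c).
  { apply continuity_pt_ext with (comp (fun b => mu b al 1) (fun a => sqrt A / a)).
    { intros; reflexivity. }
    apply continuity_pt_comp.
    - apply der_cont with (- sqrt A / c ^ 2). auto_derive. lra. field. lra.
    - apply mu_cont; auto. apply Rdiv_lt_0_compat; auto. }
  apply continuity_pt_ext with
    ((fun a => mu (sqrt A * a) al k) * (fun a => mu (sqrt A * a) al k)
     + (fun a => mu (sqrt A / a) al 1) * (fun a => mu (sqrt A / a) al 1))%F.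
  { intros x. unfold Fm, plus_fct, mult_fct. ring. }
  apply continuity_pt_plus; apply continuity_pt_mult; auto.
Qed.

Lemma attain A al k : 0 < A -> 0 < al -> (1 <= k)%nat ->
  exists a0, 1 <= a0 /\ forall a, 1 <= a -> Lam_fun A al k a0 <= Lam_fun A al k a.
Proof.
  intros HA Hal Hk.
  assert (Hs : 0 < sqrt A) by (apply sqrt_lt_R0; auto).
  set (Q0 := Qc A al (sqrt A)).
  assert (HQ : 0 < Q0) by (apply Qc_pos; lra).
  assert (Hco : forall a, 1 <= a -> Q0 * a <= Fm A al k a).
  { intros a Ha. eapply Rle_trans; [|apply (Fm_lower A al k a (sqrt A)); auto; try lra].
    - assert (0 <= (INR k - 1) ^ 2 * PI ^ 2 / A / a ^ 2).
      { pose proof (pow2_ge_0 (INR k - 1)). pose proof PI_RGT_0.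
        assert (0 < PI ^ 2) by (apply pow_lt; lra). assert (0 < a ^ 2) by (apply pow_lt; lra).
        apply Rdiv_le_0_compat; auto. apply Rdiv_le_0_compat; auto. nra. }
      unfold Q0. lra.
    - apply Rmult_le_reg_r with a; [lra|]. unfold Rdiv. rewrite Rmult_assoc, Rinv_l, Rmult_1_r by lra.
      rewrite <- (Rmult_1_r (sqrt A)) at 1. apply Rmult_le_compat_l; lra. }
  set (V := Fm A al k 1).
  assert (HV : 0 <= V) by (pose proof (Fm_nonneg A al k 1); unfold V; lra).
  set (M := 1 + V / Q0).
  assert (HM : 1 <= M) by (unfold M; assert (0 <= V / Q0) by (apply Rdiv_le_0_compat; lra); lra).
  destruct (continuity_ab_min (Fm A al k) 1 M HM) as [a0 [Hmin Ha0]].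
  { intros c Hc. apply Fm_cont; auto; lra. }
  exists a0. split; [lra|]. intros a Ha.
  rewrite !Lam_eq by (auto; lra).
  destruct (Rle_lt_dec a M) as [h|h].
  - apply Hmin; lra.
  - assert (Fm A al k a0 <= V) by (apply Hmin; lra).
    assert (Q0 * M < Q0 * a) by (apply Rmult_lt_compat_l; auto).
    assert (Q0 * M = Q0 + V) by (unfold M; field; lra).
    pose proof (Hco a Ha). lra.
Qed.


Lemma k23_facts k : (1 <= k)%nat ->
  0 < rpow (INR k) (2/3) /\ rpow (INR k) (2/3) ^ 3 = INR k ^ 2 /\ INR k <= rpow (INR k) (2/3) ^ 2.
Proof.
  intros Hk. assert (H1 : 1 <= INR k) by (apply le_INR in Hk; simpl in Hk; lra).
  rewrite rpow_eq by lra.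
  pose proof (Rpower_pos (INR k) (2/3)).
  pose proof (Rpower_cube23 (INR k) ltac:(lra)) as C.
  split; auto. split; auto.
  apply cube_le_inv. apply pow2_ge_0.
  replace ((Rpower (INR k) (2 / 3) ^ 2) ^ 3) with ((Rpower (INR k) (2 / 3) ^ 3) ^ 2) by ring.
  rewrite C. nra.
Qed.

Lemma Kcond A al : 0 < A -> 0 < al -> exists K0, (2 <= K0)%nat /\
  forall k, (K0 <= k)%nat -> al <= PI ^ 2 / sqrt A * INR k ^ 2.
Proof.
  intros HA Hal. assert (Hs : 0 < sqrt A) by (apply sqrt_lt_R0; auto).
  pose proof PI_RGT_0. assert (HP2 : 0 < PI ^ 2) by (apply pow_lt; lra).
  destruct (INR_archimed 1 (al * sqrt A / PI ^ 2) ltac:(lra)) as [N HN].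
  exists (Nat.max 2 N). split; [lia|]. intros k Hk.
  assert (HkN : INR N <= INR k) by (apply le_INR; lia).
  assert (Hk1 : 1 <= INR k).
  { assert (H2: (1 <= k)%nat) by lia. apply le_INR in H2. simpl in H2. lra. }
  assert (al * sqrt A / PI ^ 2 < INR k ^ 2) by nra.
  apply Rmult_le_reg_l with (sqrt A / PI ^ 2). apply Rdiv_lt_0_compat; auto.
  replace (sqrt A / PI ^ 2 * (PI ^ 2 / sqrt A * INR k ^ 2)) with (INR k ^ 2) by (field; lra).
  replace (sqrt A / PI ^ 2 * al) with (al * sqrt A / PI ^ 2) by (field; lra). lra.
Qed.

Definition U A al k := 3 * rpow (PI * al / A) (2/3) * rpow (INR k) (2/3).

Lemma minimizer A al k : 0 < A -> 0 < al -> (2 <= k)%nat -> al <= PI ^ 2 / sqrt A * INR k ^ 2 ->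
  exists a, 1 <= a /\ LambdaK1 A al k = Finite (Lam_fun A al k a) /\ Lam_fun A al k a <= U A al k.
Proof.
  intros HA Hal Hk Hc.
  destruct (attain A al k HA Hal ltac:(lia)) as [a0 [Ha0 Hmin]].
  destruct (upper_point A al k HA Hal Hk Hc) as [a1 [Ha1 Hu]].
  exists a0. split; auto. split. apply glb_attained; auto.
  unfold U. pose proof (Hmin a1 Ha1). lra.
Qed.

Definition Rc A al := rpow (PI * al / A) (2/3).
Definition cL A al := sqrt (PI ^ 2 / (12 * A * Rc A al)).
Definition cU A al := 3 * Rc A al / Qc A al (sqrt A).

Lemma Rc_pos A al : 0 < A -> 0 < al -> 0 < Rc A al.
Proof.
  intros. unfold Rc. pose proof PI_RGT_0. rewrite rpow_eq. apply Rpower_pos.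
  apply Rdiv_lt_0_compat; nra.
Qed.

Lemma cL_pos A al : 0 < A -> 0 < al -> 0 < cL A al.
Proof.
  intros HA Hal. unfold cL. apply sqrt_lt_R0. pose proof PI_RGT_0. pose proof (Rc_pos A al HA Hal).
  apply Rdiv_lt_0_compat. apply pow_lt; lra. nra.
Qed.

Lemma cU_pos A al : 0 < A -> 0 < al -> 0 < cU A al.
Proof.
  intros HA Hal. unfold cU. pose proof (Rc_pos A al HA Hal).
  assert (0 < sqrt A) by (apply sqrt_lt_R0; auto).
  apply Rdiv_lt_0_compat. lra. apply Qc_pos; lra.
Qed.

Lemma a_bounds A al k a : 0 < A -> 0 < al -> (2 <= k)%nat -> 1 <= a ->
  Lam_fun A al k a <= U A al k ->
  cL A al * rpow (INR k) (2/3) <= a /\ a <= cU A al * rpow (INR k) (2/3).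
Proof.
  intros HA Hal Hk Ha HL.
  assert (Hs : 0 < sqrt A) by (apply sqrt_lt_R0; auto).
  pose proof PI_RGT_0. assert (HP2 : 0 < PI ^ 2) by (apply pow_lt; lra).
  destruct (k23_facts k ltac:(lia)) as [Ht [Ht3 Ht2]].
  set (t := rpow (INR k) (2/3)) in *.
  pose proof (Rc_pos A al HA Hal) as HR.
  assert (HU : U A al k = 3 * Rc A al * t) by reflexivity.
  rewrite Lam_eq in HL by (auto; lia || lra). rewrite HU in HL.
  assert (Hkk : 2 <= INR k) by (apply le_INR in Hk; simpl in Hk; lra).
  assert (HQ : 0 < Qc A al (sqrt A)) by (apply Qc_pos; lra).
  pose proof (Fm_lower A al k a (sqrt A) HA Hal ltac:(lia) ltac:(lra)) as FL.
  assert (Hsa : sqrt A / a <= sqrt A).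
  { apply Rmult_le_reg_r with a; [lra|]. unfold Rdiv. rewrite Rmult_assoc, Rinv_l, Rmult_1_r by lra.
    rewrite <- (Rmult_1_r (sqrt A)) at 1. apply Rmult_le_compat_l; lra. }
  specialize (FL Hsa).
  assert (Hp : 0 <= (INR k - 1) ^ 2 * PI ^ 2 / A / a ^ 2).
  { assert (0 < a ^ 2) by (apply pow_lt; lra).
    apply Rdiv_le_0_compat; auto. apply Rdiv_le_0_compat; auto. apply Rmult_le_pos; [apply pow2_ge_0|lra]. }
  split.
  - unfold cL. set (c := sqrt (PI ^ 2 / (12 * A * Rc A al))).
    assert (Hc2 : c * c = PI ^ 2 / (12 * A * Rc A al)).
    { apply sqrt_sqrt. left. apply Rdiv_lt_0_compat; nra. }
    assert (Hc : 0 <= c) by apply sqrt_pos.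
    destruct (Rle_lt_dec (c * t) a) as [h|h]; auto. exfalso.
    assert (Ha2 : a ^ 2 < (c * t) ^ 2) by (apply Rsqr_incrst_1 in h; unfold Rsqr in h; simpl; lra || nra).
    assert (E1 : (INR k - 1) ^ 2 * PI ^ 2 / A / a ^ 2 <= 3 * Rc A al * t).
    { pose proof (Qc A al (sqrt A) * a). nra. }
    assert (E2 : (INR k - 1) ^ 2 * PI ^ 2 <= 3 * Rc A al * t * A * a ^ 2).
    { apply Rmult_le_compat_r with (r := A * a ^ 2) in E1; [|nra].
      replace ((INR k - 1) ^ 2 * PI ^ 2 / A / a ^ 2 * (A * a ^ 2)) with ((INR k - 1) ^ 2 * PI ^ 2) in E1 by (field; lra).
      lra. }
    assert (E3 : 3 * Rc A al * t * A * a ^ 2 < 3 * Rc A al * t * A * (c * t) ^ 2).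
    { apply Rmult_lt_compat_l; auto. repeat apply Rmult_lt_0_compat; lra. }
    assert (E4 : 3 * Rc A al * t * A * (c * t) ^ 2 = PI ^ 2 * INR k ^ 2 / 4).
    { replace (3 * Rc A al * t * A * (c * t) ^ 2) with (3 * Rc A al * A * (c * c) * t ^ 3) by ring.
      rewrite Hc2, Ht3. field. split; lra. }
    assert (E5 : PI ^ 2 * INR k ^ 2 / 4 <= (INR k - 1) ^ 2 * PI ^ 2).
    { assert (INR k / 2 <= INR k - 1) by lra.
      assert ((INR k / 2) ^ 2 <= (INR k - 1) ^ 2) by (apply pow_incr; lra).
      nra. }
    lra.
  - unfold cU. apply Rmult_le_reg_l with (Qc A al (sqrt A)); auto.
    replace (Qc A al (sqrt A) * (3 * Rc A al / Qc A al (sqrt A) * t)) with (3 * Rc A al * t) by (field; lra).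
    lra.
Qed.

Lemma limit_part A al : 0 < A -> 0 < al ->
  is_lim_seq (fun k : nat => real (LambdaK1 A al k) / rpow (INR k) (2/3))
             (Finite (3 * rpow (PI * al / A) (2/3))).
Proof.
  intros HA Hal.
  assert (Hs : 0 < sqrt A) by (apply sqrt_lt_R0; auto).
  assert (Hss : sqrt A * sqrt A = A) by (apply sqrt_sqrt; lra).
  pose proof PI_RGT_0 as HPI. assert (HP2 : 0 < PI ^ 2) by (apply pow_lt; lra).
  apply is_lim_seq_Reals. intros eps Heps.
  destruct (Kcond A al HA Hal) as [K0 [HK0 HKc]].
  set (R := Rc A al). assert (HR : 0 < R) by (apply Rc_pos; auto).
  assert (HR3 : R ^ 3 = (PI * al / A) ^ 2).
  { unfold R, Rc. rewrite rpow_eq by (apply Rdiv_lt_0_compat; nra). apply Rpower_cube23. apply Rdiv_lt_0_compat; nra. }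
  set (c := cL A al). assert (Hc : 0 < c) by (apply cL_pos; auto).
  set (r := Rmax (R - eps / 3) 0).
  assert (Hr0 : 0 <= r) by apply Rmax_r.
  assert (HrR : r < R) by (unfold r; apply Rmax_lub_lt; lra).
  assert (Hrr : R - eps / 3 <= r) by apply Rmax_l.
  set (th := (r / R) ^ 3).
  assert (Hth0 : 0 <= th) by (unfold th; apply pow_le; apply Rdiv_le_0_compat; lra).
  assert (Hth1 : th < 1).
  { unfold th. assert (r / R < 1) by (apply Rmult_lt_reg_r with R; auto; unfold Rdiv; rewrite Rmult_assoc, Rinv_l, Rmult_1_r by lra; lra).
    assert (0 <= r / R) by (apply Rdiv_le_0_compat; lra).
    set (q := r / R) in *.
    assert (q * q <= q * 1) by (apply Rmult_le_compat_l; lra).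
    assert (q * (q * q) <= q * q) by (apply Rmult_le_compat_l; lra).
    replace (q ^ 3) with (q * (q * q)) by ring. lra. }
  set (be := 1 + 2 * al / PI ^ 2).
  assert (Hbe : 1 <= be) by (unfold be; assert (0 <= 2 * al / PI ^ 2) by (apply Rdiv_le_0_compat; lra); lra).
  set (eta := Rmin (1/2) ((1 - th) / (2 * be))).
  assert (Heta0 : 0 < eta) by (unfold eta; apply Rmin_pos; [lra| apply Rdiv_lt_0_compat; lra]).
  assert (Heta1 : eta <= 1/2) by apply Rmin_l.
  assert (Heta2 : eta * (2 * be) <= 1 - th).
  { assert (eta <= (1 - th) / (2 * be)) by apply Rmin_r.
    apply Rmult_le_compat_r with (r := 2 * be) in H; [|lra].
    replace ((1 - th) / (2 * be) * (2 * be)) with (1 - th) in H by (field; lra). lra. }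
  set (x := (1 - eta) * PI ^ 2 / (PI ^ 2 + 2 * al * eta)).
  assert (Hx : (1 + th) / 2 <= x).
  { assert (Hq : 1 - 2 * al * eta / PI ^ 2 <= PI ^ 2 / (PI ^ 2 + 2 * al * eta)).
    { apply Rmult_le_reg_r with (PI ^ 2 + 2 * al * eta). nra.
      replace (PI ^ 2 / (PI ^ 2 + 2 * al * eta) * (PI ^ 2 + 2 * al * eta)) with (PI ^ 2) by (field; nra).
      replace ((1 - 2 * al * eta / PI ^ 2) * (PI ^ 2 + 2 * al * eta)) with (PI ^ 2 - (2 * al * eta) ^ 2 / PI ^ 2) by (field; lra).
      assert (0 <= (2 * al * eta) ^ 2 / PI ^ 2) by (apply Rdiv_le_0_compat; [apply pow2_ge_0|lra]). lra. }
    assert (Ex : x = (1 - eta) * (PI ^ 2 / (PI ^ 2 + 2 * al * eta))) by (unfold x; field; nra).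
    assert (x >= (1 - eta) * (1 - 2 * al * eta / PI ^ 2)) by (rewrite Ex; apply Rle_ge, Rmult_le_compat_l; lra).
    assert (E2 : (1 - eta) * (1 - 2 * al * eta / PI ^ 2) = 1 - eta * be + eta * (2 * al * eta / PI ^ 2)) by (unfold be; field; lra).
    assert (0 <= eta * (2 * al * eta / PI ^ 2)) by (apply Rmult_le_pos; [lra|apply Rdiv_le_0_compat; nra]).
    nra. }
  assert (Hx2 : th < x ^ 2).
  { assert (((1 + th) / 2) ^ 2 <= x ^ 2) by (apply pow_incr; lra). nra. }
  set (Q := Qc A al eta). assert (HQ : 0 < Q) by (apply Qc_pos; lra).
  set (Y := (1 - eta) ^ 2 * PI ^ 2 * Q ^ 2 / (4 * A)).
  assert (HY : Y = x ^ 2 * R ^ 3).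
  { rewrite HR3. unfold Y, Q, Qc, x. set (s := sqrt A) in *. rewrite <- Hss. field. split; nra. }
  assert (HYp : 0 < Y) by (rewrite HY; apply Rmult_lt_0_compat; [nra| apply pow_lt; lra]).
  set (w := Rpower Y (1/3)).
  assert (Hw3 : w ^ 3 = Y) by (apply Rpower_cube13; auto).
  assert (Hw0 : 0 < w) by apply Rpower_pos.
  assert (Hwr : r < w).
  { apply cube_lt_inv; [lra|]. rewrite Hw3, HY.
    replace (r ^ 3) with (th * R ^ 3) by (unfold th; field; lra).
    apply Rmult_lt_compat_r; auto. apply pow_lt; lra. }
  set (Z := 1 / eta + (sqrt A / (c * eta)) ^ 2).
  destruct (INR_archimed 1 Z ltac:(lra)) as [N0 HN0].
  exists (Nat.max K0 N0). intros k Hk. unfold ge in Hk.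
  assert (HkK : (K0 <= k)%nat) by lia.
  assert (Hk2 : (2 <= k)%nat) by lia.
  assert (HkZ : Z < INR k) by (assert (INR N0 <= INR k) by (apply le_INR; lia); lra).
  destruct (minimizer A al k HA Hal Hk2 (HKc k HkK)) as [a [Ha1 [HL HU]]].
  destruct (a_bounds A al k a HA Hal Hk2 Ha1 HU) as [HaL _].
  destruct (k23_facts k ltac:(lia)) as [Ht [Ht3 Ht2]].
  fold c in HaL.
  set (t := rpow (INR k) (2/3)) in *.
  rewrite HL. simpl real.
  assert (HkE : 1 <= INR k * eta).
  { assert (1 / eta < INR k).
    { assert (0 <= (sqrt A / (c * eta)) ^ 2) by apply pow2_ge_0. unfold Z in HkZ. lra. }
    apply Rmult_lt_compat_r with (r := eta) in H; auto.
    replace (1 / eta * eta) with 1 in H by (field; lra). lra. }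
  assert (Hts : sqrt A / (c * eta) <= t).
  { assert (Hsq : (sqrt A / (c * eta)) ^ 2 <= t ^ 2).
    { assert (0 <= 1 / eta) by (apply Rdiv_le_0_compat; lra). unfold Z in HkZ. lra. }
    assert (0 <= sqrt A / (c * eta)) by (apply Rdiv_le_0_compat; nra).
    destruct (Rle_lt_dec (sqrt A / (c * eta)) t) as [h|h]; auto.
    assert (t * t < (sqrt A / (c * eta)) * (sqrt A / (c * eta))) by (apply Rmult_le_0_lt_compat; lra).
    simpl in Hsq. lra. }
  assert (Hap : 0 < a) by lra.
  assert (Hsa : sqrt A / a <= eta).
  { apply Rmult_le_reg_r with a; auto. unfold Rdiv. rewrite Rmult_assoc, Rinv_l, Rmult_1_r by lra.
    assert (sqrt A <= c * eta * t).
    { apply Rmult_le_compat_l with (r := c * eta) in Hts; [|nra].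
      replace (c * eta * (sqrt A / (c * eta))) with (sqrt A) in Hts by (field; lra). lra. }
    nra. }
  rewrite Lam_eq in * by (auto; lia || lra).
  pose proof (Fm_lower A al k a eta HA Hal ltac:(lia) Hap Hsa) as FL. fold Q in FL.
  assert (HP : (1 - eta) ^ 2 * INR k ^ 2 * PI ^ 2 / A / a ^ 2 <= (INR k - 1) ^ 2 * PI ^ 2 / A / a ^ 2).
  { unfold Rdiv. apply Rmult_le_compat_r. left; apply Rinv_0_lt_compat, pow_lt; lra.
    apply Rmult_le_compat_r. left; apply Rinv_0_lt_compat; lra.
    rewrite <- Rpow_mult_distr. apply Rmult_le_compat_r; [lra|].
    apply pow_incr. split; nra. }
  assert (AM : 3 * (t * w) <= (1 - eta) ^ 2 * INR k ^ 2 * PI ^ 2 / A / a ^ 2 + Q * a).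
  { apply amgm3; auto. nra.
    rewrite Rpow_mult_distr, Ht3, Hw3. unfold Y. field. lra. }
  assert (Hlow : 3 * w <= Fm A al k a / t).
  { apply Rmult_le_reg_r with t; auto. replace (Fm A al k a / t * t) with (Fm A al k a) by (field; lra). lra. }
  assert (Hup : Fm A al k a / t <= 3 * rpow (PI * al / A) (2 / 3)).
  { apply Rmult_le_reg_r with t; auto. replace (Fm A al k a / t * t) with (Fm A al k a) by (field; lra).
    unfold U in HU. fold t in HU. lra. }
  fold (Rc A al) in Hup. fold R in Hup.
  change (rpow (PI * al / A) (2 / 3)) with (Rc A al). fold R. unfold Rdist. apply Rabs_def1; lra.
Qed.

Theorem lemma6p1 (A alpha : R) (hA : 0 < A) (halpha : 0 < alpha) :
  (* lower bound *)
  (forall k : nat, (2 <= k)%nat ->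
     Rbar_le
       (Finite (3 * PI ^ 2 * rpow alpha (2/3)
                / (rpow (PI ^ 2 + 2 * sqrt A * alpha) (2/3) * rpow A (2/3))
                * rpow (INR k - 2) (2/3)))
       (LambdaK1 A alpha k)) /\
  (* upper bound *)
  (forall k : nat, (2 <= k)%nat ->
     alpha <= PI ^ 2 / sqrt A * INR k ^ 2 ->
     Rbar_le (LambdaK1 A alpha k)
             (Finite (3 * rpow (PI * alpha / A) (2/3) * rpow (INR k) (2/3)))) /\
  (* the infimum is attained *)
  (forall k : nat, (2 <= k)%nat ->
     exists a, 1 <= a /\ LambdaK1 A alpha k = Finite (Lam_fun A alpha k a)) /\
  (* minimizers of order k^{2/3} for large k *)
  (exists c c' : R, 0 < c /\ c <= c' /\
     exists K : nat, forall k : nat, (2 <= k)%nat -> (K <= k)%nat ->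
       exists a, 1 <= a /\ LambdaK1 A alpha k = Finite (Lam_fun A alpha k a) /\
         c * rpow (INR k) (2/3) <= a /\ a <= c' * rpow (INR k) (2/3)) /\
  (* asymptotics *)
  is_lim_seq (fun k : nat => real (LambdaK1 A alpha k) / rpow (INR k) (2/3))
             (Finite (3 * rpow (PI * alpha / A) (2/3))).
Proof.
  split; [intros k Hk; apply part1; auto|].
  split; [intros k Hk Hc; apply part2; auto|].
  split.
  { intros k Hk. destruct (attain A alpha k hA halpha ltac:(lia)) as [a0 [Ha0 Hmin]].
    exists a0. split; auto. apply glb_attained; auto. }
  split; [|apply limit_part; auto].
  pose proof (cL_pos A alpha hA halpha). pose proof (cU_pos A alpha hA halpha).
  exists (Rmin (cL A alpha) (cU A alpha)), (cU A alpha).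
  split; [apply Rmin_pos; auto|]. split; [apply Rmin_r|].
  destruct (Kcond A alpha hA halpha) as [K0 [HK0 HKc]].
  exists K0. intros k Hk HkK.
  destruct (minimizer A alpha k hA halpha Hk (HKc k HkK)) as [a [Ha1 [HL HU]]].
  destruct (a_bounds A alpha k a hA halpha Hk Ha1 HU) as [HaL HaU].
  exists a. split; auto. split; auto. split; auto.
  destruct (k23_facts k ltac:(lia)) as [Ht _].
  eapply Rle_trans; [|exact HaL]. apply Rmult_le_compat_r; [lra|apply Rmin_l].
Qed.
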